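(* Let $G=F\rtimes_\phi\langle t\rangle$ be a $\{$f.g. free$\}$-by-cyclic group that admits UPG monodromy (not necessarily for the splitting given by $\phi$). If $g,h\in F\cdot t$ are distinct, then $g$ and $h$ do not have a common nontrivial power.
   Context: $F$ is a finitely generated free group, $\phi\in\mathrm{Aut}(F)$, and $t$ generates the $\mathbf{Z}$ factor. ''$G$ admits UPG monodromy'' means $G$ can be written as $F'\rtimes_{\psi}\mathbf{Z}$ with $F'$ finitely generated free and $[\psi]\in\mathrm{Out}(F')$ UPG: every conjugacy class grows at most polynomially in cyclic word length under iteration, and the induced map on $F'^{ab}$ is unipotent. Two elements have a common nontrivial power if $g^m=h^n\ne1$ for some integers $m,n$. *)

(* Defs.v *)
From mathcomp Require Import all_boot all_order all_algebra.
Set Implicit Arguments. Unset Strict Implicit. Unset Printing Implicit Defensive.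
Import GRing.Theory.

(* A letter: generator x_i (b = false) or its inverse x_i^-1 (b = true). *)
Definition letter (n : nat) := ('I_n * bool)%type.
Definition word (n : nat) := seq (letter n).
Definition linv n (x : letter n) : letter n := (x.1, ~~ x.2).
Definition winv n (w : word n) : word n := rev (map (@linv n) w).
Definition gen n (i : 'I_n) : word n := [:: (i, false)].

Definition reduced n (w : word n) : bool :=
  if w is a :: s then path (fun x y => y != linv x) a s else true.

Definition cons_red n (a : letter n) (w : word n) : word n :=
  if w is b :: t then (if b == linv a then t else a :: w) else [:: a].
Definition reduce n (w : word n) : word n := foldr (@cons_red n) [::] w.

Definition wmul n (u v : word n) : word n := reduce (u ++ v).

Definition endo (n : nat) := 'I_n -> word n.
Definition wapp n (f : endo n) (w : word n) : word n :=
  reduce (flatten (map (fun x : letter n => if x.2 then winv (f x.1) else f x.1) w)).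

Definition inverse_pair n (f g : endo n) : Prop :=
  (forall i, wapp f (g i) = gen i) /\ (forall i, wapp g (f i) = gen i).

(* phi^k for k : int, where phi = f and phi^-1 = g *)
Definition epow n (f g : endo n) (k : int) : word n -> word n :=
  match k with
  | Posz m => iter m (wapp f)
  | Negz m => iter m.+1 (wapp g)
  end.

(* The semidirect product G = F_n x|_phi <t>, with t u t^-1 = phi(u).
   An element (u, a) (u reduced) stands for u t^a. *)
Definition selt (n : nat) := (word n * int)%type.
Definition svalid n (x : selt n) : bool := reduced x.1.
Definition sone n : selt n := ([::], 0%R).
Definition smul n (f g : endo n) (x y : selt n) : selt n :=
  (wmul x.1 (epow f g x.2 y.1), (x.2 + y.2)%R).
Definition sinv n (f g : endo n) (x : selt n) : selt n :=
  (epow f g (- x.2)%R (winv x.1), (- x.2)%R).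
Definition spow n (f g : endo n) (x : selt n) (m : int) : selt n :=
  match m with
  | Posz k => iter k (smul f g x) (sone n)
  | Negz k => iter k.+1 (smul f g (sinv f g x)) (sone n)
  end.

Definition siso n (f g : endo n) n' (f' g' : endo n') (F : selt n -> selt n') : Prop :=
  [/\ (forall x, svalid x -> svalid (F x)),
      (forall x y, svalid x -> svalid y -> F (smul f g x y) = smul f' g' (F x) (F y)),
      (forall x y, svalid x -> svalid y -> F x = F y -> x = y) &
      (forall y, svalid y -> exists2 x, svalid x & F x = y)].

(* UPG: (1) every conjugacy class grows at most polynomially in cyclic word
   length (cyclic length of w = minimal length of a reduced conjugate);
   (2) the induced map on the abelianization Z^n is unipotent. *)
Definition poly_growth n (f : endo n) : Prop :=
  forall w : word n, reduced w ->
    exists C d : nat, forall k : nat,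
      exists u : word n, size (reduce (winv u ++ iter k (wapp f) w ++ u)) <= C * k.+1 ^ d.

(* exponent-sum matrix: row i = image of x_i in Z^n *)
Definition abmx n (f : endo n) : 'M[int]_n :=
  \matrix_(i, j) ((count (pred1 (j, false)) (f i))%:Z - (count (pred1 (j, true)) (f i))%:Z)%R.

Definition unipotent_ab n (f : endo n) : Prop :=
  exists k : nat, ((abmx f - 1%:M) ^+ k = 0)%R.

Definition UPG n (f : endo n) : Prop := poly_growth f /\ unipotent_ab f.

Definition admits_UPG_monodromy n (f g : endo n) : Prop :=
  exists n' (f' g' : endo n') (F : selt n -> selt n'),
    [/\ inverse_pair f' g', UPG f' & siso f g f' g' F].

Definition common_nontriv_power n (f g : endo n) (x y : selt n) : Prop :=
  exists m k : int, spow f g x m = spow f g y k /\ spow f g x m <> sone n.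

(* Main.v *)
From HB Require Import structures.
From mathcomp Require Import all_boot all_order all_algebra all_field.
From mathcomp Require boolp.
From mathcomp Require Import zify ring.
Require Import Defs.
Set Implicit Arguments. Unset Strict Implicit. Unset Printing Implicit Defensive.
Import GRing.Theory Num.Theory.
Local Open Scope ring_scope.

Section Ser.
Variable n : nat.
Definition ser := seq 'I_n -> algC.
HB.instance Definition _ := boolp.gen_eqMixin ser.
HB.instance Definition _ := boolp.gen_choiceMixin ser.
Definition s0 : ser := fun _ => 0.
Definition sadd (a b : ser) : ser := fun w => a w + b w.
Definition sopp (a : ser) : ser := fun w => - a w.
Lemma saddA : associative sadd.
Proof. by move=> a b c; apply: boolp.funext => w; rewrite /sadd addrA. Qed.
Lemma saddC : commutative sadd.
Proof. by move=> a b; apply: boolp.funext => w; rewrite /sadd addrC. Qed.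
Lemma sadd0 : left_id s0 sadd.
Proof. by move=> a; apply: boolp.funext => w; rewrite /sadd /s0 add0r. Qed.
Lemma saddN : left_inverse s0 sopp sadd.
Proof. by move=> a; apply: boolp.funext => w; rewrite /sadd /sopp /s0 addNr. Qed.
HB.instance Definition _ := GRing.isZmodule.Build ser saddA saddC sadd0 saddN.

Definition dl (l : 'I_n) (a : ser) : ser := fun w => a (l :: w).
Fixpoint smulf (w : seq 'I_n) (a b : ser) {struct w} : algC :=
  match w with
  | [::] => a [::] * b [::]
  | l :: w' => smulf w' (dl l a) b + a [::] * b (l :: w')
  end.
Definition sermul (a b : ser) : ser := fun w => smulf w a b.
Definition s1 : ser := fun w => if w is [::] then 1 else 0.
Definition sc (c : algC) : ser := fun w => if w is [::] then c else 0.

Lemma smulfDl w a b c : smulf w (a + b) c = smulf w a c + smulf w b c.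
Proof.
elim: w a b => [|l w IH] a b /=; first by rewrite mulrDl.
have -> : dl l (a + b) = dl l a + dl l b by [].
by rewrite IH mulrDl addrACA.
Qed.
Lemma smulfDr w a b c : smulf w a (b + c) = smulf w a b + smulf w a c.
Proof.
elim: w a => [|l w IH] a /=; first by rewrite mulrDr.
by rewrite IH mulrDr addrACA.
Qed.
Lemma smulf0l w b : smulf w 0 b = 0.
Proof. by elim: w => [|l w IH] /=; rewrite ?mul0r // [dl _ _]/= IH addr0. Qed.
Definition sscale (k : algC) (a : ser) : ser := fun w => k * a w.
Lemma smulfZl w k a b : smulf w (sscale k a) b = k * smulf w a b.
Proof.
elim: w a => [|l w IH] a /=; first by rewrite /sscale mulrA.
have -> : dl l (sscale k a) = sscale k (dl l a) by [].
by rewrite IH mulrDr /sscale mulrA.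
Qed.
Lemma smulfZr w k a b : smulf w a (sscale k b) = k * smulf w a b.
Proof.
elim: w a => [|l w IH] a /=; first by rewrite /sscale mulrCA.
by rewrite IH mulrDr /sscale mulrCA.
Qed.

Lemma dl_mul l a b : dl l (sermul a b) = sermul (dl l a) b + sscale (a [::]) (dl l b).
Proof. by []. Qed.

Lemma smulA : associative sermul.
Proof.
move=> a b c; apply: boolp.funext => w; rewrite /sermul.
elim: w a b c => [|l w IH] a b c /=; first by rewrite mulrA.
by rewrite dl_mul smulfDl smulfZl IH /= mulrDr mulrA addrA.
Qed.
Lemma smul1 : left_id s1 sermul.
Proof.
move=> a; apply: boolp.funext => w; rewrite /sermul.
case: w => [|l w] /=; first by rewrite mul1r.
have -> : dl l s1 = 0 by apply: boolp.funext => v.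
by rewrite smulf0l mul1r add0r.
Qed.
Lemma smulr1 : right_id s1 sermul.
Proof.
move=> a; apply: boolp.funext => w; rewrite /sermul.
elim: w a => [|l w IH] a /=; first by rewrite mulr1.
by rewrite IH mulr0 addr0.
Qed.
Lemma smulDl : left_distributive sermul +%R.
Proof. by move=> a b c; apply: boolp.funext => w; rewrite /sermul smulfDl. Qed.
Lemma smulDr : right_distributive sermul +%R.
Proof. by move=> a b c; apply: boolp.funext => w; rewrite /sermul smulfDr. Qed.
Lemma s1_neq0 : s1 != 0.
Proof. by apply/eqP => /(congr1 (fun f => f [::])) /eqP; rewrite oner_eq0. Qed.
HB.instance Definition _ := GRing.Zmodule_isNzRing.Build ser smulA smul1 smulr1 smulDl smulDr s1_neq0.

Lemma mulE (a b : ser) w : (a * b) w = smulf w a b. Proof. by []. Qed.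
Lemma addE (a b : ser) w : (a + b) w = a w + b w. Proof. by []. Qed.
Lemma oppE (a : ser) w : (- a) w = - a w. Proof. by []. Qed.
Lemma subE (a b : ser) w : (a - b) w = a w - b w. Proof. by []. Qed.
Lemma zeroE w : (0 : ser) w = 0. Proof. by []. Qed.
Lemma oneE w : (1 : ser) w = if w is [::] then 1 else 0. Proof. by []. Qed.
Lemma sumE I (r : seq I) (P : pred I) (F : I -> ser) w :
  (\sum_(i <- r | P i) F i) w = \sum_(i <- r | P i) F i w.
Proof. by elim/big_rec2: _ => // i y1 y2 _ <-. Qed.
End Ser.

Section Ser2.
Variable n : nat.
Local Notation ser := (ser n).
Local Notation sc := (@sc n).

Lemma fext (a b : ser) : (forall w, a w = b w) -> a = b.
Proof. exact: boolp.funext. Qed.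

Lemma mul_nil (a b : ser) : (a * b) [::] = a [::] * b [::]. Proof. by []. Qed.
Lemma mul_cons (a b : ser) l w : (a * b) (l :: w) = (dl l a * b) w + a [::] * b (l :: w).
Proof. by []. Qed.
Lemma scE c w : sc c w = if w is [::] then c else 0. Proof. by []. Qed.
Lemma dl_sc l c : dl l (sc c) = 0. Proof. by apply: fext. Qed.
Lemma dl1 l : dl l (1 : ser) = 0. Proof. by apply: fext. Qed.
Lemma dlD l (a b : ser) : dl l (a + b) = dl l a + dl l b. Proof. by []. Qed.
Lemma dlN l (a : ser) : dl l (- a) = - dl l a. Proof. by []. Qed.
Lemma dlB l (a b : ser) : dl l (a - b) = dl l a - dl l b. Proof. by []. Qed.
Lemma dl_sum l I (r : seq I) (P : pred I) (F : I -> ser) :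
  dl l (\sum_(i <- r | P i) F i) = \sum_(i <- r | P i) dl l (F i).
Proof. by apply: fext => w; rewrite /dl !sumE. Qed.
Lemma dlE l (a : ser) w : dl l a w = a (l :: w). Proof. by []. Qed.

Lemma mul_scl c (a : ser) w : (sc c * a) w = c * a w.
Proof.
case: w => [|l w] //; rewrite mul_cons dl_sc.
by rewrite mulE smulf0l add0r.
Qed.
Lemma mul_scr c (a : ser) w : (a * sc c) w = a w * c.
Proof.
elim: w a => [|l w IH] a //; rewrite mul_cons IH /= mulr0 addr0 //.
Qed.
Lemma sc_comm c (a : ser) : sc c * a = a * sc c.
Proof. by apply: fext => w; rewrite mul_scl mul_scr mulrC. Qed.
Lemma scD c d : sc (c + d) = sc c + sc d.
Proof. by apply: fext => -[|l w] //=; rewrite addE !scE addr0. Qed.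
Lemma scM c d : sc (c * d) = sc c * sc d.
Proof. by apply: fext => w; rewrite mul_scl !scE; case: w => //; rewrite mulr0. Qed.
Lemma sc1 : sc 1 = 1. Proof. by []. Qed.
Lemma sc0 : sc 0 = 0. Proof. by apply: fext => -[]. Qed.
Lemma scN c : sc (- c) = - sc c. Proof. by apply: fext => -[|l w] //=; rewrite oppE oppr0. Qed.
Lemma scB c d : sc (c - d) = sc c - sc d. Proof. by rewrite scD scN. Qed.
Lemma sc_nat k : sc k%:R = k%:R.
Proof. by elim: k => [|k IH]; rewrite ?sc0 // !mulrS scD IH. Qed.
Lemma sc_sum I (r : seq I) (P : pred I) (F : I -> algC) :
  sc (\sum_(i <- r | P i) F i) = \sum_(i <- r | P i) sc (F i).
Proof. by elim/big_rec2: _ => [|i x y _ <-]; rewrite ?sc0 // scD. Qed.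

Lemma dlM l (a b : ser) : dl l (a * b) = dl l a * b + sc (a [::]) * dl l b.
Proof. by apply: fext => w; rewrite dlE mul_cons addE mul_scl. Qed.

Definition Y (l : 'I_n) : ser := fun w => if w is [:: m] then (m == l)%:R else 0.
Lemma Y_nil l : Y l [::] = 0. Proof. by []. Qed.
Lemma dlY m l : dl m (Y l) = sc (m == l)%:R.
Proof. by apply: fext => -[|x w]. Qed.

Lemma ser_decomp (a : ser) : a = sc (a [::]) + \sum_(l < n) Y l * dl l a.
Proof.
apply: fext => -[|m w]; rewrite addE sumE.
  by rewrite big1 ?addr0 // => l _; rewrite mul_nil Y_nil mul0r.
rewrite scE add0r (bigD1 m) //= big1 ?addr0.
  by rewrite mul_cons dlY mul_scl eqxx mul1r Y_nil mul0r addr0.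
by move=> l /negbTE ne; rewrite mul_cons dlY mul_scl eq_sym ne mul0r Y_nil mul0r addr0.
Qed.

Lemma loc_le (x y y' : ser) (w : seq 'I_n) :
  (forall v, (size v <= size w)%N -> y v = y' v) -> (x * y) w = (x * y') w.
Proof.
elim: w x => [|l w IH] x H; first by rewrite !mul_nil H.
rewrite !mul_cons H // (IH (dl l x)) // => v hv.
by apply: H; apply: leq_trans hv _.
Qed.
Lemma loc_lt (x y y' : ser) (w : seq 'I_n) : x [::] = 0 ->
  (forall v, (size v < size w)%N -> y v = y' v) -> (x * y) w = (x * y') w.
Proof.
case: w => [|l w] x0 H; first by rewrite !mul_nil x0 !mul0r.
by rewrite !mul_cons x0 !mul0r (@loc_le _ y y').
Qed.
Lemma mul_cons0 (x y : ser) l w : x [::] = 0 -> (x * y) (l :: w) = (dl l x * y) w.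
Proof. by move=> x0; rewrite mul_cons x0 mul0r addr0. Qed.

Lemma ser_ind (P : seq 'I_n -> Prop) :
  (forall w, (forall v, (size v < size w)%N -> P v) -> P w) -> forall w, P w.
Proof.
move=> H w; move: {2}(size w) (leqnn (size w)) => k; elim: k w => [|k IH] w hw.
  by apply: H => v; rewrite leqn0 in hw; rewrite (eqP hw) ltn0.
by apply: H => v hv; apply: IH; rewrite -ltnS (leq_trans hv hw).
Qed.
End Ser2.

Section Sigma.
Variable n : nat.
Local Notation ser := (ser n).
Local Notation sc := (@sc n).
Variable phi : 'I_n -> ser.
Hypothesis phi0 : forall l, phi l [::] = 0.

Fixpoint sigf (L : nat) (a : ser) (w : seq 'I_n) : algC :=
  match L with
  | 0 => sc (a [::]) w
  | L'.+1 => sc (a [::]) w + \sum_(l < n) smulf w (phi l) (sigf L' (dl l a))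
  end.
Definition sigma (a : ser) : ser := fun w => sigf (size w) a w.

Lemma sigf_nil L a : sigf L a [::] = a [::].
Proof.
case: L => [|L] //=; rewrite big1 ?addr0 // => l _.
by rewrite phi0 mul0r.
Qed.

Lemma sigf_stable L L' a w : (size w <= L)%N -> (size w <= L')%N ->
  sigf L a w = sigf L' a w.
Proof.
elim: L L' a w => [|L IH] L' a w.
  by rewrite leqn0 => /nilP -> _; rewrite !sigf_nil.
case: w => [|m w] h1 h2; first by rewrite !sigf_nil.
case: L' h2 => [|L'] // h2 /=; congr (_ + _); apply: eq_bigr => l _.
rewrite phi0 !mul0r !addr0; apply: loc_le => v hv; apply: IH.
  by apply: (leq_trans hv h1).
by apply: (leq_trans hv h2).
Qed.

Lemma sigma_eq a : sigma a = sc (a [::]) + \sum_(l < n) phi l * sigma (dl l a).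
Proof.
apply: fext => w; rewrite addE sumE; case: w => [|m w].
  rewrite /sigma /= big1 ?addr0 // => l _; by rewrite mul_nil phi0 mul0r.
rewrite /sigma /=; congr (_ + _); apply: eq_bigr => l _.
rewrite mul_cons0 // phi0 mul0r addr0 -mulE; apply: loc_le => v hv.
by apply: sigf_stable.
Qed.

Lemma sigma_nil a : sigma a [::] = a [::].
Proof. exact: sigf_nil. Qed.

Lemma sum_loc (F G : 'I_n -> ser) w :
  (forall l v, (size v < size w)%N -> F l v = G l v) ->
  (\sum_(l < n) phi l * F l) w = (\sum_(l < n) phi l * G l) w.
Proof. move=> H; rewrite !sumE; apply: eq_bigr => l _; apply: loc_lt => //; exact: H. Qed.

Lemma sigmaD a b : sigma (a + b) = sigma a + sigma b.
Proof.
apply: fext => w; elim/ser_ind: w a b => w IH a b.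
rewrite (sigma_eq (a + b)) addE.
rewrite (@sum_loc _ (fun l => sigma (dl l a) + sigma (dl l b))); last first.
  by move=> l v hv; rewrite dlD IH.
rewrite -addE; congr (_ w); rewrite (sigma_eq a) (sigma_eq b).
have -> : (a + b) [::] = a [::] + b [::] by [].
rewrite scD.
under eq_bigr do rewrite mulrDr.
by rewrite big_split /= addrACA.
Qed.

Lemma sigma0 : sigma 0 = 0.
Proof. have h := sigmaD 0 0; rewrite addr0 in h. by apply: (addrI (sigma 0)); rewrite addr0 -h. Qed.
Lemma sigmaN a : sigma (- a) = - sigma a.
Proof. by apply/eqP; rewrite -addr_eq0 -sigmaD addNr sigma0. Qed.
Lemma sigmaB a b : sigma (a - b) = sigma a - sigma b.
Proof. by rewrite sigmaD sigmaN. Qed.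
Lemma sigma_sum I (r : seq I) (P : pred I) (F : I -> ser) :
  sigma (\sum_(i <- r | P i) F i) = \sum_(i <- r | P i) sigma (F i).
Proof. by elim/big_rec2: _ => [|i x y _ <-]; rewrite ?sigma0 // sigmaD. Qed.

Lemma sigma_sc c : sigma (sc c) = sc c.
Proof.
rewrite sigma_eq big1 ?addr0 // => l _.
by rewrite dl_sc sigma0 mulr0.
Qed.
Lemma sigma1 : sigma 1 = 1.
Proof. by rewrite -sc1 sigma_sc. Qed.

Lemma sigmaY l : sigma (Y l) = phi l.
Proof.
rewrite sigma_eq Y_nil sc0 add0r (bigD1 l) //= big1 ?addr0.
  by rewrite dlY eqxx sigma_sc sc1 mulr1.
by move=> m /negbTE ne; rewrite dlY ne sigma_sc sc0 mulr0.
Qed.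

Lemma sigmaM a b : sigma (a * b) = sigma a * sigma b.
Proof.
apply: fext => w; elim/ser_ind: w a b => w IH a b.
rewrite (sigma_eq (a * b)) addE.
rewrite (@sum_loc _ (fun l => sigma (dl l a) * sigma b + sc (a [::]) * sigma (dl l b))); last first.
  by move=> l v hv; rewrite dlM sigmaD addE !IH // sigma_sc.
rewrite -addE; congr (_ w).
rewrite (sigma_eq a) (sigma_eq b) mul_nil scM mulrDl mulrDr.
under eq_bigr do rewrite mulrDr.
rewrite big_split /= mulr_suml addrA -!addrA; f_equal.
rewrite addrC mulr_sumr; f_equal; apply: eq_bigr => l _.
  by rewrite !mulrA (sc_comm (a [::]) (phi l)).
by rewrite mulrA.
Qed.

Lemma sigma_scl c a : sigma (sc c * a) = sc c * sigma a.
Proof. by rewrite sigmaM sigma_sc. Qed.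

Lemma sigma_lin a m : sigma a [:: m] = \sum_(l < n) a [:: l] * phi l [:: m].
Proof.
rewrite sigma_eq addE sumE /= add0r; apply: eq_bigr => l _.
by rewrite mul_cons phi0 mul0r addr0 mul_nil sigma_nil mulrC.
Qed.
End Sigma.

Section Magnus.
Variable n : nat.
Local Notation ser := (ser n).
Local Notation sc := (@sc n).
Variable P : 'M[algC]_n.

Definition Mpos (i : 'I_n) : ser := 1 + \sum_(l < n) sc (P i l) * Y l.
Definition Mneg (i : 'I_n) : ser := fun w => \prod_(l <- w) (- P i l).

Lemma Mpos_nil i : Mpos i [::] = 1.
Proof.
rewrite /Mpos addE sumE big1 ?addr0 // => l _.
by rewrite mul_scl Y_nil mulr0.
Qed.
Lemma Mneg_nil i : Mneg i [::] = 1.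
Proof. by rewrite /Mneg big_nil. Qed.

Lemma dl_Mpos i l : dl l (Mpos i) = sc (P i l).
Proof.
apply: fext => v; rewrite dlE /Mpos addE sumE oneE add0r.
rewrite (bigD1 l) //= big1 ?addr0.
  by rewrite mul_scl /= eqxx; case: v => [|x v]; rewrite ?mulr1 ?mulr0.
move=> m /negbTE ne; rewrite mul_scl /=.
by case: v => [|x v]; rewrite ?mulr0 // eq_sym ne mulr0.
Qed.
Lemma dl_Mneg i l : dl l (Mneg i) = sc (- P i l) * Mneg i.
Proof. by apply: fext => v; rewrite mul_scl dlE /Mneg big_cons. Qed.

Lemma MposMneg i : Mpos i * Mneg i = 1.
Proof.
apply: fext => -[|l w]; first by rewrite mul_nil Mpos_nil Mneg_nil mul1r.
rewrite mul_cons dl_Mpos mul_scl Mpos_nil mul1r /Mneg big_cons.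
by rewrite mulNr addrN.
Qed.
Lemma MnegMpos i : Mneg i * Mpos i = 1.
Proof.
apply: fext => w; elim: w => [|l w IH]; first by rewrite mul_nil Mpos_nil Mneg_nil mul1r.
rewrite mul_cons dl_Mneg -mulrA mul_scl IH Mneg_nil mul1r.
rewrite -dlE dl_Mpos !oneE scE; case: w {IH} => [|x w]; last by rewrite mulr0 addr0.
by rewrite mulr1 addNr.
Qed.

Definition Mlet (a : letter n) : ser := if a.2 then Mneg a.1 else Mpos a.1.
Definition Mw (w : word n) : ser := foldr (fun a acc => Mlet a * acc) 1 w.

Lemma Mlet_linv a : Mlet a * Mlet (linv a) = 1.
Proof. by case: a => i [] /=; rewrite /Mlet /= ?MnegMpos ?MposMneg. Qed.
Lemma Mlet_linv' a : Mlet (linv a) * Mlet a = 1.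
Proof. by case: a => i [] /=; rewrite /Mlet /= ?MnegMpos ?MposMneg. Qed.

Lemma Mw_cons a w : Mw (a :: w) = Mlet a * Mw w. Proof. by []. Qed.
Lemma Mw_nilw : Mw [::] = 1. Proof. by []. Qed.

Lemma Mw_cons_red a s : Mw (cons_red a s) = Mlet a * Mw s.
Proof.
case: s => [|b t] //; rewrite /cons_red; case: ifP => // /eqP ->.
by rewrite Mw_cons mulrA Mlet_linv mul1r.
Qed.
Lemma Mw_reduce w : Mw (reduce w) = Mw w.
Proof.
elim: w => [|a w IH] //; change (reduce (a :: w)) with (cons_red a (reduce w)).
by rewrite Mw_cons_red IH.
Qed.
Lemma Mw_cat u v : Mw (u ++ v) = Mw u * Mw v.
Proof. by elim: u => [|a u IH]; rewrite ?mul1r // cat_cons !Mw_cons IH mulrA. Qed.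
Lemma winv_cons (a : letter n) w : winv (a :: w) = winv w ++ [:: linv a].
Proof. by rewrite /winv /= rev_cons cats1. Qed.
Lemma Mw_winvR w : Mw w * Mw (winv w) = 1.
Proof.
elim: w => [|a w IH]; first by rewrite mul1r.
rewrite winv_cons Mw_cat Mw_cons /= mulr1 -mulrA (mulrA (Mw w)) IH mul1r.
exact: Mlet_linv.
Qed.
Lemma Mw_winvL w : Mw (winv w) * Mw w = 1.
Proof.
elim: w => [|a w IH]; first by rewrite mul1r.
rewrite winv_cons Mw_cat Mw_cons /= mulr1 -mulrA (mulrA (Mlet _)) Mlet_linv' mul1r.
exact: IH.
Qed.
Lemma Mw_nil w : Mw w [::] = 1.
Proof.
elim: w => [|[i b] w IH] //; rewrite Mw_cons mul_nil IH mulr1 /Mlet.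
by case: b => /=; rewrite ?Mneg_nil ?Mpos_nil.
Qed.

Definition es (w : word n) (j : 'I_n) : algC :=
  (count (pred1 (j, false)) w)%:R - (count (pred1 (j, true)) w)%:R.

Lemma Mw_one w m : Mw w [:: m] = \sum_(j < n) es w j * P j m.
Proof.
elim: w => [|[i b] w IH].
  by rewrite big1 // => j _; rewrite /es /= subrr mul0r.
rewrite Mw_cons mul_cons mul_nil Mw_nil mulr1 IH.
have -> : Mlet (i, b) [::] = 1 by rewrite /Mlet; case: b => /=; rewrite ?Mneg_nil ?Mpos_nil.
have -> : \sum_(j < n) es ((i, b) :: w) j * P j m =
   \sum_(j < n) es w j * P j m + \sum_(j < n) (((i,b) == (j,false))%:R - ((i,b) == (j,true))%:R) * P j m.
  rewrite -big_split /=; apply: eq_bigr => j _; rewrite -mulrDl; congr (_ * _).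
  by rewrite /es /= !natrD opprD addrACA addrC.
rewrite addrC; congr (_ + _); first by rewrite [LHS]mul1r.
rewrite (bigD1 i) //= big1 ?addr0; last first.
  by move=> j /negbTE ne; rewrite !xpair_eqE eq_sym ne /= subrr mul0r.
rewrite !xpair_eqE eqxx /= /Mlet /=.
case: b; rewrite /= ?dl_Mneg ?dl_Mpos ?mul_scl ?Mneg_nil ?scE ?mulr1 //=.
by rewrite sub0r mulN1r.
by rewrite subr0 mul1r.
Qed.
End Magnus.

Section Words.
Variable n : nat.
Implicit Types (a b : letter n) (w : word n).

Lemma linvK a : linv (linv a) = a.
Proof. by case: a => i b; rewrite /linv /= negbK. Qed.

Lemma reduced_cons a w : reduced (a :: w) = (if w is b :: _ then b != linv a else true) && reduced w.
Proof. by case: w => [|b w] //=. Qed.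

Lemma cons_red_reduced a s : reduced s -> reduced (cons_red a s).
Proof.
case: s => [|b t] // H; rewrite /cons_red; case: ifP => [_|/negbT ne].
  by move: H; rewrite reduced_cons => /andP[].
by rewrite reduced_cons ne.
Qed.
Lemma reduce_reduced w : reduced (reduce w).
Proof. by elim: w => [|a w IH] //=; apply: cons_red_reduced. Qed.
Lemma reduce_id w : reduced w -> reduce w = w.
Proof.
elim: w => [|a w IH] // H; move: (H); rewrite reduced_cons => /andP[h1 h2].
change (reduce (a :: w)) with (cons_red a (reduce w)); rewrite IH //.
by case: w h1 {IH H h2} => [|b t] //= /negbTE ->.
Qed.

Lemma reduced_cat (s t : word n) : reduced (s ++ t) =
  [&& reduced s, reduced t & (if s is x :: s' then
      (if t is y :: _ then y != linv (last x s') else true) else true)].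
Proof.
case: s => [|x s] /=; first by rewrite andbT.
rewrite cat_path; case: t => [|y t] /=; first by rewrite !andbT.
by rewrite [in RHS](andbC (path _ y t)).
Qed.

Lemma winv_cons' a w : winv (a :: w) = winv w ++ [:: linv a].
Proof. by rewrite /winv /= rev_cons cats1. Qed.

Lemma winv_nil : winv [::] = ([::] : word n). Proof. by []. Qed.

Lemma last_winv a w : last (linv a) (winv w) = linv (head a w).
Proof. by case: w => [|b w] //; rewrite winv_cons' last_cat. Qed.

Lemma winv_reduced w : reduced w -> reduced (winv w).
Proof.
elim: w => [|a w IH] // H; move: (H); rewrite reduced_cons => /andP[h1 h2].
rewrite winv_cons' reduced_cat IH //=.
case E: (winv w) => [|x s] //.
have := last_winv a w; rewrite E /= => ->.
case: w h1 E {IH H h2} => [|b w] //= h1 _.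
apply: contra h1 => /eqP e; apply/eqP.
by rewrite e linvK.
Qed.

Lemma reduced_winv_cat a p b q : reduced (a :: p) -> reduced (b :: q) -> a != b ->
  reduced (winv (a :: p) ++ b :: q).
Proof.
move=> hp hq ne; rewrite reduced_cat winv_reduced // hq /=.
rewrite winv_cons'; case E: (winv p ++ [:: linv a]) => [|x s].
  by case: (winv p) E.
have := congr1 (last x) E; rewrite last_cat /= => <-.
by rewrite linvK eq_sym.
Qed.
End Words.

Section Skel.
Variable n : nat.
Local Notation ser := (ser n).
Local Notation sc := (@sc n).
Variable P : 'M[algC]_n.
Hypothesis HP : forall i l, P i l = (i == l)%:R.
Local Notation Mw := (Mw P).
Local Notation Mlet := (Mlet P).
Implicit Types (a c : letter n) (w : word n) (v : seq 'I_n).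

Definition alt v := if v is x :: s then path (fun x y => x != y) x s else true.
Definition hd_ok a v := if v is l :: _ then l != a.1 else true.

Lemma alt_tail l v : alt (l :: v) -> alt v /\ hd_ok (l, false) v.
Proof. by case: v => [|x v] //= /andP[h1 h2]; rewrite eq_sym. Qed.

Lemma Mlet_nil a : Mlet a [::] = 1.
Proof. by case: a => i [] /=; rewrite /Mlet /= ?Mneg_nil ?Mpos_nil. Qed.

Lemma dl_Mlet_ne a l : l != a.1 -> dl l (Mlet a) = 0.
Proof.
case: a => i b /= ne; rewrite /Mlet /=; have h : P i l = 0 by rewrite HP eq_sym (negbTE ne).
case: b; rewrite ?dl_Mneg ?dl_Mpos h ?oppr0 sc0 ?mul0r //.
Qed.

Lemma G0 a w v : hd_ok a v -> Mw (a :: w) v = Mw w v.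
Proof.
case: v => [|l v] h; first by rewrite !Mw_nil.
by rewrite Mw_cons mul_cons dl_Mlet_ne // mul0r zeroE Mlet_nil mul1r add0r.
Qed.

Definition sgn a : int := if a.2 then -1 else 1.

Lemma Mw_step a w l v : alt (l :: v) ->
  Mw (a :: w) (l :: v) = (l == a.1)%:R * (sgn a)%:~R * Mw w v + Mw w (l :: v).
Proof.
move=> alv; rewrite Mw_cons mul_cons Mlet_nil mul1r; congr (_ + _).
case: (eqVneq l a.1) => [e|ne]; last by rewrite dl_Mlet_ne // mul0r zeroE mul0r mul0r.
case: a e => i [] /= e; rewrite /Mlet /= e.
  rewrite dl_Mneg HP eqxx -mulrA mul_scl.
  have -> : Mneg P i * Mw w = Mw ((i, true) :: w) by [].
  rewrite G0; last by have [_] := alt_tail alv; rewrite e.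
  by rewrite /sgn /= mulr1n mul1r mulN1r.
by rewrite dl_Mpos HP eqxx mul_scl /sgn /= mulr1n !mul1r.
Qed.

Definition ext a w := if w is c :: _ then c.1 == a.1 else false.
Fixpoint sk w : seq 'I_n :=
  match w with [::] => [::] | a :: w' => if ext a w' then sk w' else a.1 :: sk w' end.
Fixpoint ee w : int :=
  match w with [::] => 0 | a :: w' => if ext a w' then ee w' + sgn a else sgn a end.
Fixpoint cft w : algC :=
  match w with
  | [::] => 1
  | a :: w' => if ext a w' then cft w' else (if w' is [::] then 1 else (ee w')%:~R * cft w')
  end.
Definition cf w : algC := if w is [::] then 1 else (ee w)%:~R * cft w.

Lemma sk_head c w : sk (c :: w) = c.1 :: behead (sk (c :: w)).
Proof.
elim: w c => [|d w IH] c //=; case: ifP => //= /eqP <-.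
by rewrite -IH.
Qed.

Lemma alt_sk w : alt (sk w).
Proof.
elim: w => [|a w IH] //; rewrite [sk _]/=; case: ifP => // /negbT ne.
case: w ne IH => [|c w] // ne IH; rewrite (sk_head c w) in IH *.
move: IH; set S := behead _ => IH.
by rewrite /= -[path _ _ S]/(alt (c.1 :: S)) IH andbT eq_sym.
Qed.

Lemma cf_cons a w : cf (a :: w) = (ee (a :: w))%:~R * cft (a :: w).
Proof. by []. Qed.

Lemma cft_notext a w : ~~ ext a w -> cft (a :: w) = cf w.
Proof. by move=> /negbTE h /=; rewrite h; case: w h. Qed.

Lemma eq_cons_nat (l i : 'I_n) v S :
  ((l :: v) == (i :: S))%:R = (l == i)%:R * (v == S)%:R :> algC.
Proof. by rewrite eqseq_cons; case: (l == i); rewrite ?mul1r ?mul0r. Qed.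

Lemma skel w : reduced w ->
  [/\ (forall v, alt v -> (size (sk w) < size v)%N -> Mw w v = 0),
      (forall v, alt v -> size v = size (sk w) -> Mw w v = (v == sk w)%:R * cf w) &
      (forall a w', w = a :: w' -> forall v, alt v -> hd_ok a v -> (size v).+1 = size (sk w) ->
          Mw w v = (v == behead (sk w))%:R * cft w)].
Proof.
elim: w => [|a w IH] red.
  split => //.
  - by move=> [|x v].
  - by move=> [|x v] //= _ _; rewrite ?eqxx ?mul1r.
have redw : reduced w by move: red; rewrite reduced_cons => /andP[].
have [A B C] := IH redw.
case E: (ext a w).
-
  case: w E red redw IH A B C => [|c w] // E red redw IH A B C.
  have ci : c.1 = a.1 by apply/eqP.
  have skE : sk (a :: c :: w) = sk (c :: w) by rewrite /= -/(ext a (c :: w)) E.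
  have cftE : cft (a :: c :: w) = cft (c :: w) by rewrite /= -/(ext a (c :: w)) E.
  have cfE : cf (a :: c :: w) = cf (c :: w) + (sgn a)%:~R * cft (c :: w).
    by rewrite !cf_cons cftE /= -/(ext a (c :: w)) E intrD mulrDl mulrC.
  rewrite skE cftE cfE; set S := sk (c :: w).
  have SE : S = a.1 :: behead S by rewrite /S sk_head ci.
  split.
  + move=> [|l v] alv // hs; rewrite /= in hs; rewrite Mw_step // (A (l :: v)) // addr0.
    case: (eqVneq l a.1) => [e|]; last by rewrite mul0r mul0r.
    have [alv' hdv] := alt_tail alv.
    move: hs; rewrite ltnS leq_eqVlt => /orP[/eqP hs|hs]; last by rewrite A // !mulr0.
    rewrite B // -/S; case: (eqVneq v S) => [ev|]; last by rewrite mul0r !mulr0.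
    by move: hdv; rewrite ev SE e /= eqxx.
  + move=> [|l v] alv hs; first by rewrite SE in hs.
    have [alv' hdv] := alt_tail alv.
    rewrite Mw_step // (B (l :: v)) //.
    case: (eqVneq l a.1) => [e|ne]; last first.
      by rewrite mul0r mul0r add0r -/S SE !eq_cons_nat (negbTE ne) !mul0r.
    have hd' : hd_ok c v by rewrite /hd_ok ci -e; exact: hdv.
    have sz : (size v).+1 = size (sk (c :: w)) by rewrite -hs.
    rewrite (C c w erefl v) //.
    rewrite -/S SE !eq_cons_nat e eqxx /=; ring.
  + move=> a' w' [ea _] v alv hdv hs; subst a'.
    have hd' : hd_ok c v by rewrite /hd_ok ci.
    by rewrite G0 // (C c w erefl v).
-
  have skE : sk (a :: w) = a.1 :: sk w by rewrite /= E.
  have cftE : cft (a :: w) = cf w by rewrite cft_notext ?E.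
  have cfE : cf (a :: w) = (sgn a)%:~R * cf w by rewrite cf_cons cftE /= E.
  rewrite skE cftE cfE.
  split.
  + move=> [|l v] alv // hs; rewrite /= in hs; have [alv' _] := alt_tail alv.
    rewrite ltnS in hs.
    have h1 : Mw w v = 0 by apply: A.
    have h2 : Mw w (l :: v) = 0 by apply: A => //; rewrite /= ltnS ltnW.
    by rewrite Mw_step // h1 h2 mulr0 addr0.
  + move=> [|l v] alv // hs; rewrite /= in hs; case: hs => hs; have [alv' _] := alt_tail alv.
    have h2 : Mw w (l :: v) = 0 by apply: A => //; rewrite /= hs.
    by rewrite Mw_step // h2 addr0 B // eq_cons_nat; ring.
  + move=> a' w' [ea _] v alv hdv hs; subst a'; case: hs => hs.
    by rewrite G0 // B.
Qed.

Definition sg_ok a (e : int) := if a.2 then e < 0 else 0 < e.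

Lemma sg_ok_nz a e : sg_ok a e -> e != 0.
Proof. by rewrite /sg_ok; case: a.2 => h; apply/eqP => e0; move: h; rewrite e0. Qed.

Lemma cft_nz w : reduced w -> w != [::] ->
  cft w != 0 /\ (forall a w', w = a :: w' -> sg_ok a (ee w)).
Proof.
elim: w => [|a w IH] // red _.
have redw : reduced w by move: red; rewrite reduced_cons => /andP[].
case E: (ext a w).
- case: w E red redw IH => [|c w] // E red redw IH.
  have [IH1 IH2] := IH redw erefl.
  have same : c.2 = a.2.
    move: E red; rewrite reduced_cons /= => /eqP; case: a c {IH IH1 IH2 redw} => [i b] [j b'] /= ->.
    by rewrite /linv /= xpair_eqE eqxx /=; case: b; case: b'.
  split; first by rewrite /= -/(ext a (c :: w)) E.
  move=> a' w' [<- _]; have := IH2 c w erefl.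
  rewrite /= -/(ext a (c :: w)) E /sg_ok /sgn same; case: a.2 => /=; lia.
- split.
    rewrite cft_notext ?E //; case: w {E red} redw IH => [|c w] redw IH; first by rewrite oner_eq0.
    have [h1 h2] := IH redw erefl; rewrite /cf mulf_neq0 // intr_eq0.
    exact: (sg_ok_nz (h2 c w erefl)).
  move=> a' w' [<- _]; rewrite /= E /sg_ok /sgn; case: a.2 => //.
Qed.

Lemma cf_nz w : reduced w -> cf w != 0.
Proof.
case: w => [|a w] red; first by rewrite oner_eq0.
have [h1 h2] := cft_nz red erefl.
by rewrite cf_cons mulf_neq0 // intr_eq0 (sg_ok_nz (h2 a w erefl)).
Qed.

Lemma Mw_eq1 w : reduced w -> Mw w = 1 -> w = [::].
Proof.
case: w => [|a w] // red e.
have [_ B _] := skel red.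
have := B (sk (a :: w)) (alt_sk _) erefl; rewrite eqxx mul1r e sk_head oneE => h.
by move: (cf_nz red); rewrite -h eqxx.
Qed.

Lemma Mw_inj p q : reduced p -> reduced q -> Mw p = Mw q -> p = q.
Proof.
elim: p q => [|a p IH] q rp rq e.
  by rewrite (Mw_eq1 rq) // -e.
case: q rq e => [|b q] rq e.
  by have := Mw_eq1 rp e.
have rp' : reduced p by move: rp; rewrite reduced_cons => /andP[].
have rq' : reduced q by move: rq; rewrite reduced_cons => /andP[].
case: (eqVneq a b) => [ab|ne].
  subst b; congr (_ :: _); apply: IH => //.
  move: e; rewrite !Mw_cons => e.
  by rewrite -[Mw p]mul1r -(Mlet_linv' P a) -mulrA e mulrA Mlet_linv' mul1r.
have red := reduced_winv_cat rp rq ne.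
have := Mw_eq1 red; rewrite Mw_cat -e Mw_winvL => /(_ erefl).
by case: (winv (a :: p)).
Qed.
End Skel.

Section Hom.
Variable n : nat.
Local Notation ser := (ser n).
Local Notation sc := (@sc n).

Lemma sum_PQ (P Q : 'M[algC]_n) (X : 'I_n -> ser) i : P *m Q = 1%:M ->
  \sum_(l < n) sc (P i l) * \sum_(j < n) sc (Q l j) * X j = X i.
Proof.
move=> PQ.
under eq_bigr do rewrite mulr_sumr.
rewrite exchange_big /=.
under eq_bigr do under eq_bigr do rewrite mulrA -scM.
under eq_bigr do rewrite -mulr_suml -sc_sum.
have E j : \sum_(l < n) P i l * Q l j = (i == j)%:R.
  by have := congr1 (fun M : 'M[algC]_n => M i j) PQ; rewrite !mxE.
under eq_bigr do rewrite E.
rewrite (bigD1 i) //= big1 ?addr0 ?eqxx ?sc1 ?mul1r // => j /negbTE ne.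
by rewrite eq_sym ne sc0 mul0r.
Qed.

Lemma Mpos1 i : Mpos 1%:M i = 1 + Y i :> ser.
Proof.
rewrite /Mpos (bigD1 i) //= big1 ?addr0 ?mxE ?eqxx ?sc1 ?mul1r // => j /negbTE ne.
by rewrite mxE eq_sym ne sc0 mul0r.
Qed.

Variable P : 'M[algC]_n.

Lemma hom_Mw (rho : ser -> ser) (t u : 'I_n -> ser) :
  (forall x y, rho (x * y) = rho x * rho y) -> rho 1 = 1 ->
  (forall i, rho (Mpos P i) = t i) -> (forall i, t i * u i = 1) ->
  forall w, rho (Mw P w) = foldr (fun a acc => (if a.2 then u a.1 else t a.1) * acc) 1 w.
Proof.
move=> rM r1 rt tu; elim => [|[i b] w IH]; first by rewrite Mw_nilw.
rewrite Mw_cons rM IH /=; congr (_ * _); rewrite /Mlet /=; case: b => //=.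
by rewrite -[rho _]mulr1 -(tu i) mulrA -rt -rM MnegMpos r1 mul1r.
Qed.

Lemma Mw_flatten (ss : seq (word n)) :
  Mw P (flatten ss) = foldr (fun s acc => Mw P s * acc) 1 ss.
Proof. by elim: ss => [|s ss IH] //=; rewrite Mw_cat IH. Qed.

Hypothesis Pu : P \in unitmx.
Let Q := invmx P.

Definition phif (f : endo n) (l : 'I_n) : ser := \sum_(i < n) sc (Q l i) * (Mw P (f i) - 1).
Lemma phif0 f l : phif f l [::] = 0.
Proof.
rewrite /phif sumE big1 // => i _; rewrite mul_scl subE Mw_nil oneE subrr mulr0 //.
Qed.
Definition sigf_ f := sigma (phif f).

Lemma sigf_Mpos f i : sigf_ f (Mpos P i) = Mw P (f i).
Proof.
have h0 := phif0 f.
rewrite /sigf_ /Mpos (sigmaD h0) (sigma1 h0) (sigma_sum h0).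
under eq_bigr do rewrite (sigma_scl h0) (sigmaY h0).
rewrite /phif sum_PQ ?mulmxV // addrC subrK //.
Qed.

Lemma sigf_Mw f w : sigf_ f (Mw P w) = Mw P (wapp f w).
Proof.
rewrite (@hom_Mw (sigf_ f) (fun i => Mw P (f i)) (fun i => Mw P (winv (f i)))).
- rewrite /wapp Mw_reduce Mw_flatten; elim: w => [|a w IH] //=.
  by rewrite IH; case: a.2.
- by move=> x y; apply: sigmaM; apply: phif0.
- by apply: sigma1; apply: phif0.
- exact: sigf_Mpos.
- by move=> i; apply: Mw_winvR.
Qed.

Definition phit (l : 'I_n) : ser := \sum_(i < n) sc (Q l i) * Y i.
Lemma phit0 l : phit l [::] = 0.
Proof. by rewrite /phit sumE big1 // => i _; rewrite mul_scl Y_nil mulr0. Qed.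

Lemma tau_Mw w : sigma phit (Mw P w) = Mw 1%:M w.
Proof.
rewrite (@hom_Mw (sigma phit) (fun i => Mpos 1%:M i) (fun i => Mneg 1%:M i)).
- by elim: w => [|a w IH] //=; rewrite IH /Mlet; case: a.2.
- by move=> x y; apply: sigmaM; apply: phit0.
- by apply: sigma1; apply: phit0.
- move=> i; have h0 := phit0.
  rewrite /Mpos (sigmaD h0) (sigma1 h0) (sigma_sum h0).
  under eq_bigr do rewrite (sigma_scl h0) (sigmaY h0).
  rewrite /phit sum_PQ ?mulmxV // -/(Mpos 1%:M i) Mpos1 //.
- by move=> i; apply: MposMneg.
Qed.

Lemma MwP_inj p q : reduced p -> reduced q -> Mw P p = Mw P q -> p = q.
Proof.
move=> rp rq e; apply: (@Mw_inj n 1%:M) => //; first by move=> i l; rewrite mxE.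
by rewrite -!tau_Mw e.
Qed.
End Hom.

Section Weight.
Variable n : nat.
Local Notation ser := (ser n).
Local Notation sc := (@sc n).
Variable wl : 'I_n -> nat.
Hypothesis wl_pos : forall l, (0 < wl l)%N.

Definition wt (v : seq 'I_n) : nat := \sum_(l <- v) wl l.
Lemma wt_cons l v : wt (l :: v) = (wl l + wt v)%N.
Proof. by rewrite /wt big_cons. Qed.
Lemma wt_nil : wt [::] = 0%N. Proof. by rewrite /wt big_nil. Qed.

Definition van (W : nat) (x : ser) := forall v, (wt v < W)%N -> x v = 0.

Lemma van0 W : van W 0. Proof. by []. Qed.
Lemma vanD W x y : van W x -> van W y -> van W (x + y).
Proof. by move=> hx hy v hv; rewrite addE hx ?hy ?addr0. Qed.
Lemma vanN W x : van W x -> van W (- x).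
Proof. by move=> hx v hv; rewrite oppE hx ?oppr0. Qed.
Lemma vanB W x y : van W x -> van W y -> van W (x - y).
Proof. by move=> hx hy; apply: vanD => //; apply: vanN. Qed.
Lemma van_le W W' x : (W' <= W)%N -> van W x -> van W' x.
Proof. by move=> le hx v hv; apply: hx; apply: leq_trans hv le. Qed.
Lemma van_dl W l x : van W x -> van (W - wl l) (dl l x).
Proof. by move=> hx v hv; rewrite dlE hx // wt_cons; lia. Qed.
Lemma van_nat W k x : van W x -> van W (k%:R * x).
Proof. by move=> hx v hv; rewrite -sc_nat mul_scl hx ?mulr0. Qed.

Lemma van_mul_loc W1 W2 x y v : van W1 x ->
  (forall u, (size u <= size v)%N -> (wt u < W2)%N -> y u = 0) ->
  (wt v < W1 + W2)%N -> (x * y) v = 0.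
Proof.
elim: v x W1 => [|l v IH] x W1 hx hy hv.
  rewrite mul_nil; move: hv; rewrite wt_nil => hv.
  case: W1 hx hv => [|W1] hx hv; first by rewrite (hy [::]) ?mulr0 ?wt_nil.
  by rewrite hx ?mul0r // wt_nil.
rewrite mul_cons (IH _ (W1 - wl l)%N) ?add0r; first last.
- by move: hv; rewrite wt_cons; lia.
- by move=> u hu; apply: hy; apply: leq_trans hu _.
- exact: van_dl.
case: W1 hx hv => [|W1] hx hv; last by rewrite hx ?mul0r // wt_nil.
by rewrite hy ?mulr0.
Qed.

Lemma van_mul W1 W2 x y : van W1 x -> van W2 y -> van (W1 + W2) (x * y).
Proof. by move=> hx hy v hv; apply: van_mul_loc hx _ hv => u _; apply: hy. Qed.

Variable phi : 'I_n -> ser.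
Hypothesis phi0 : forall l, phi l [::] = 0.
Hypothesis Hphi : forall l, van (wl l).+1 (phi l - Y l).
Local Notation psi := (sigma phi).

Lemma vanY l : van (wl l) (Y l).
Proof.
move=> [|m [|x v]] //= hv; case: eqP => // e; move: hv; rewrite e wt_cons wt_nil.
by rewrite addn0 ltnn.
Qed.

Lemma psi_van W d : van W d -> van W.+1 (psi d - d).
Proof.
move=> hd v; elim/ser_ind: v d W hd => v IH d W hd hv.
case: v IH hv => [|m v] IH hv; first by rewrite subE sigma_nil ?subrr.
have E2 : d (m :: v) = (sc (d [::]) + \sum_(l < n) Y l * dl l d) (m :: v) by rewrite -ser_decomp.
rewrite subE (sigma_eq phi0 d) E2 !addE !sumE opprD addrACA subrr add0r -sumrB.
rewrite big1 // => l _.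
have -> : (phi l * psi (dl l d)) (m :: v) - (Y l * dl l d) (m :: v) =
  ((phi l - Y l) * psi (dl l d)) (m :: v) + (Y l * (psi (dl l d) - dl l d)) (m :: v).
  have E3 : phi l * psi (dl l d) - Y l * dl l d =
    (phi l - Y l) * psi (dl l d) + Y l * (psi (dl l d) - dl l d).
    by rewrite mulrBl mulrBr addrA subrK.
  by have := congr1 (fun f : ser => f (m :: v)) E3 => /=; rewrite subE addE.
have hdl := van_dl (l:=l) hd.
have IHl : forall u, (size u < size (m :: v))%N -> (wt u < (W - wl l).+1)%N ->
    (psi (dl l d) - dl l d) u = 0.
  by move=> u hu hwu; apply: (IH u hu _ (W - wl l)%N hdl hwu).
rewrite mul_cons0; last by rewrite subE phi0 Y_nil subrr.
rewrite mul_cons0; last by rewrite Y_nil.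
rewrite (@van_mul_loc ((wl l).+1 - wl m)%N (W - wl l)%N); first last.
- by move: hv; rewrite wt_cons; lia.
- move=> u hu hwu; have := IHl u hu (leq_trans hwu (leqnSn _)).
  by rewrite subE hdl // subr0.
- by apply: van_dl.
rewrite dlY mul_scl add0r; case: eqP => [e|]; last by rewrite mul0r.
by rewrite IHl ?mulr0 //; move: hv; rewrite wt_cons e; lia.
Qed.

Lemma psi_van' W d : van W d -> van W (psi d).
Proof.
move=> hd; have := psi_van hd => h v hv.
by have := h v (leq_trans hv (leqnSn _)); rewrite subE hd // subr0.
Qed.

Definition psir r := iter r psi.
Lemma psirB r x y : psir r (x - y) = psir r x - psir r y.
Proof. by elim: r => [|r IH] //=; rewrite IH sigmaB. Qed.
Lemma psir1 r : psir r 1 = 1.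
Proof. by elim: r => [|r IH] //=; rewrite IH sigma1. Qed.

Lemma psir_van r W d : van W d -> van W.+1 (psir r d - d).
Proof.
move=> hd; elim: r => [|r IH] /=; first by rewrite subrr.
have -> : psi (psir r d) - d = (psi (psir r d) - psir r d) + (psir r d - d).
  by rewrite addrA subrK.
apply: vanD => //; apply: psi_van.
have -> : psir r d = (psir r d - d) + d by rewrite subrK.
by apply: vanD => //; apply: van_le IH.
Qed.
Lemma psir_van' r W d : van W d -> van W (psir r d).
Proof.
move=> hd; have -> : psir r d = (psir r d - d) + d by rewrite subrK.
by apply: vanD => //; apply: van_le (psir_van r hd).
Qed.

Lemma psir_one r x : van 1 (x - 1) -> van 1 (psir r x - 1).
Proof. by move=> h; rewrite -(psir1 r) -psirB; apply: psir_van'. Qed.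

Definition Pw r k (a : ser) := iter k (fun acc => a * psir r acc) 1.

Lemma Pw_one r k a : van 1 (a - 1) -> van 1 (Pw r k a - 1).
Proof.
move=> ha; elim: k => [|k IH] /=; first by rewrite subrr.
have -> : a * psir r (Pw r k a) - 1 = (a - 1) * psir r (Pw r k a) + (psir r (Pw r k a) - 1).
  by rewrite mulrBl mul1r addrA subrK.
apply: vanD; last exact: psir_one.
by apply: (@van_mul 1 0) => // v; rewrite ltn0.
Qed.

Lemma Pw_diff r k a b W : van 1 (a - 1) -> van 1 (b - 1) -> van W (b - a) ->
  van W.+1 (Pw r k b - Pw r k a - k%:R * (b - a)).
Proof.
move=> ha hb hd; elim: k => [|k IH] /=; first by rewrite subrr mul0r subrr.
set D := Pw r k b - Pw r k a.
have hD : van W D.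
  have -> : D = (D - k%:R * (b - a)) + k%:R * (b - a) by rewrite subrK.
  by apply: vanD; [apply: van_le IH | apply: van_nat].
set X := psir r (Pw r k b); set Y := psir r (Pw r k a); set c := k%:R * (b - a).
have e1 : b * X - a * Y = (b - a) * X + a * (X - Y) by rewrite mulrBl mulrBr addrA subrK.
rewrite mulrS mulrDl mul1r e1 opprD addrACA.
apply: vanD.
  have -> : (b - a) * X - (b - a) = (b - a) * (X - 1) by rewrite mulrBr mulr1.
  rewrite -addn1; apply: van_mul => //; apply: psir_one; exact: Pw_one.
have -> : X - Y = psir r D by rewrite /D psirB.
have -> : a * psir r D - c = (a - 1) * psir r D + ((psir r D - D) + (D - c)).
  by rewrite (addrA (psir r D - D)) subrK mulrBl mul1r addrA subrK.
apply: vanD; last by apply: vanD => //; apply: psir_van.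
rewrite -add1n; apply: van_mul => //; exact: psir_van'.
Qed.

Lemma wt_lt1 v : (wt v < 1)%N -> v = [::].
Proof. by case: v => // l v; rewrite wt_cons; have := wl_pos l; lia. Qed.

Lemma van1_nil (x : ser) : x [::] = 1 -> van 1 (x - 1).
Proof. by move=> h v /wt_lt1 ->; rewrite subE h oneE subrr. Qed.

Lemma Pw_inj r k (a b : ser) : (0 < k)%N -> a [::] = 1 -> b [::] = 1 ->
  Pw r k a = Pw r k b -> a = b.
Proof.
move=> k0 ha hb e.
suff H : forall W, van W (b - a).
  apply: fext => v; apply/eqP; rewrite eq_sym -subr_eq0; apply/eqP.
  by have := H (wt v).+1 v (ltnSn _); rewrite subE.
elim => [|W IH]; first by move=> v; rewrite ltn0.
have := Pw_diff r k (van1_nil ha) (van1_nil hb) IH; rewrite e subrr sub0r => h v hv.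
have := h v hv; rewrite oppE -sc_nat mul_scl => /eqP; rewrite oppr_eq0 mulf_eq0.
by rewrite pnatr_eq0 eqn0Ngt k0 /= => /eqP.
Qed.
End Weight.

Section Trig.
Variable n : nat.
Implicit Types M N : 'M[algC]_n.

Lemma trig_mul M N : is_trig_mx M -> is_trig_mx N ->
  is_trig_mx (M *m N) /\ forall i, (M *m N) i i = M i i * N i i.
Proof.
move=> /is_trig_mxP hM /is_trig_mxP hN; split.
  apply/is_trig_mxP => i j lij; rewrite mxE big1 // => k _.
  case: (ltnP i k) => ik; first by rewrite hM ?mul0r.
  by rewrite hN ?mulr0 // (leq_ltn_trans ik lij).
move=> i; rewrite mxE (bigD1 i) //= big1 ?addr0 // => k /negbTE ne.
case: (ltngtP i k) => ik; first by rewrite hM ?mul0r.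
  by rewrite hN ?mulr0.
by move: ne; rewrite (val_inj ik) eqxx.
Qed.

Lemma trig_exp M k : is_trig_mx M ->
  is_trig_mx (M ^+ k) /\ forall i, (M ^+ k) i i = (M i i) ^+ k.
Proof.
move=> hM; elim: k => [|k [IH1 IH2]].
  by split; [apply: scalar_mx_is_trig | move=> i; rewrite expr0 mxE eqxx].
have [h1 h2] := trig_mul hM IH1.
by split; [rewrite exprS -mulmxE | move=> i; rewrite exprS -mulmxE h2 IH2 -exprS].
Qed.

Lemma conj_exp (P B : 'M[algC]_n) k : P \in unitmx ->
  (P *m B *m invmx P) ^+ k = P *m B ^+ k *m invmx P.
Proof.
move=> Pu; elim: k => [|k IH]; first by rewrite !expr0 mulmx1 mulmxV.
rewrite exprS IH -!mulmxE !mulmxA mulmxKV // -[_ *m B *m B ^+ k]mulmxA.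
by rewrite exprS mulmxE.
Qed.

Lemma trig_unip (A : 'M[algC]_n) k : (A - 1%:M) ^+ k = 0 ->
  exists2 P : 'M[algC]_n, P \in unitmx &
    (forall l m : 'I_n, (l < m)%N -> (invmx P *m A *m P) l m = 0) /\
    (forall l, (invmx P *m A *m P) l l = 1).
Proof.
move=> hk.
have hc : {in [:: A] &, forall X Y, comm_mx X Y}.
  by move=> X Y; rewrite !inE => /eqP -> /eqP ->.
have [P0 P0u] := @cotrigonalization algC n [:: A] hc.
rewrite /= andbT /similar_to /conjmx => htrig.
have P0unit := unitarymx_unit P0u.
rewrite pinvmxE // in htrig.
exists (invmx P0); first by rewrite unitmx_inv.
rewrite invmxK; set T := P0 *m A *m invmx P0.
have TE : T - 1%:M = P0 *m (A - 1%:M) *m invmx P0.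
  by rewrite mulmxBr mulmxBl mulmx1 mulmxV.
have Tk : (T - 1%:M) ^+ k = 0 by rewrite TE conj_exp // hk mulmx0 mul0mx.
have trT1 : is_trig_mx (T - 1%:M).
  apply/is_trig_mxP => i j lij.
  have -> : (T - 1%:M) i j = T i j - (1%:M : 'M[algC]_n) i j by rewrite !mxE.
  by rewrite (is_trig_mxP htrig) // mxE -val_eqE /= (ltn_eqF lij) subrr.
have [_ hdiag] := trig_exp k trT1.
split; first by move=> l m lm; apply: (is_trig_mxP htrig).
move=> l; have := hdiag l.
have -> : (T - 1%:M) l l = T l l - 1 by rewrite !mxE eqxx.
rewrite Tk mxE => /esym/eqP.
by rewrite expf_eq0 => /andP[_]; rewrite subr_eq0 => /eqP.
Qed.
End Trig.

Section PosCase.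
Variable n : nat.
Local Notation ser := (ser n).

Definition Ac (f : endo n) : 'M[algC]_n := map_mx (fun z : int => z%:~R) (abmx f).

Lemma es_Ac f i j : es (f i) j = Ac f i j.
Proof. by rewrite /Ac /abmx !mxE intrB -!pmulrn. Qed.

Lemma wl_fact (l : 'I_n) : (n + 2 <= 2 * n + 1 - l <= 2 * n + 1)%N.
Proof. have := ltn_ord l; lia. Qed.

Lemma pos_case (f g : endo n) k : (Ac f - 1%:M) ^+ k = 0 ->
  forall p q r j, reduced p -> reduced q -> (0 < j)%N ->
  iter j (smul f g (p, Posz r)) (sone n) = iter j (smul f g (q, Posz r)) (sone n) -> p = q.
Proof.
move=> hk p q r j rp rq j0 e.
have [P Pu [Tl Td]] := trig_unip hk.
pose wl (l : 'I_n) := (2 * n + 1 - l)%N.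
have wl_pos l : (0 < wl l)%N by have := wl_fact l; rewrite /wl; lia.
pose phi := phif P f.
have phi0 : forall l, phi l [::] = 0 by move=> l; apply: phif0.
have Hphi : forall l, van wl (wl l).+1 (phi l - Y l).
  move=> l [|x [|y u]] hv.
  - by rewrite subE phi0 Y_nil subrr.
  - rewrite subE /phi /phif sumE /=.
    have -> : \sum_(i < n) (sc (invmx P l i) * (Mw P (f i) - 1)) [:: x] =
        (invmx P *m Ac f *m P) l x.
      rewrite !mxE; under eq_bigr do rewrite mul_scl subE Mw_one oneE subr0.
      under [RHS]eq_bigr do rewrite mxE mulr_suml.
      rewrite exchange_big /=; apply: eq_bigr => i _; rewrite mulr_sumr.
      by apply: eq_bigr => m _; rewrite es_Ac mulrA.
    move: hv; rewrite /wt big_cons big_nil addn0 ltnS /wl => hv.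
    have lx : (l <= x)%N by have := ltn_ord x; have := ltn_ord l; lia.
    case: (eqVneq x l) => [->|ne]; first by rewrite Td /= mulr1n subrr.
    rewrite (Tl l x) /= ?subrr //.
    by rewrite ltn_neqAle lx andbT; apply: contra ne => /eqP h; apply/eqP/val_inj.
  - move: hv; rewrite /wt !big_cons /wl.
    have := wl_fact x; have := wl_fact y; have := wl_fact l; lia.
have Mw_iter : forall r w, Mw P (iter r (wapp f) w) = psir phi r (Mw P w).
  elim => [|r' IH] w //=; rewrite -IH -sigf_Mw //.
have PwE : forall p j, Mw P (iter j (smul f g (p, Posz r)) (sone n)).1 = Pw phi r j (Mw P p).
  move=> p' ; elim => [|j' IH] //=.
  by rewrite /wmul Mw_reduce Mw_cat Mw_iter IH.
have := PwE p j; rewrite e PwE => /esym h.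
apply: (MwP_inj Pu rp rq).
by apply: (Pw_inj wl_pos phi0 Hphi j0 _ _ h); apply: Mw_nil.
Qed.
End PosCase.

Section Unip.
Variable n : nat.

Lemma map_mx_exp (A : 'M[int]_n) k :
  map_mx (fun z : int => z%:~R : algC) (A ^+ k) = (map_mx (fun z : int => z%:~R : algC) A) ^+ k.
Proof.
elim: k => [|k IH].
  by rewrite !expr0; apply/matrixP => i j; rewrite !mxE; case: (i == j); rewrite ?mulr1n ?mulr0n.
by rewrite !exprS -!mulmxE map_mxM IH.
Qed.

Lemma unip_C (f : endo n) : unipotent_ab f -> exists k, (Ac f - 1%:M) ^+ k = 0.
Proof.
move=> [k hk]; exists k.
have -> : Ac f - 1%:M = map_mx (fun z : int => z%:~R : algC) (abmx f - 1%:M).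
  by rewrite map_mxB map_mx1.
by rewrite -map_mx_exp hk map_mx0.
Qed.

Lemma Mw1_one (w : word n) m : Mw 1%:M w [:: m] = es w m.
Proof.
rewrite Mw_one (bigD1 m) //= big1 ?addr0 ?mxE ?eqxx ?mulr1 // => j /negbTE ne.
by rewrite mxE ne mulr0.
Qed.

Lemma es_gen i m : es (gen i) m = (1%:M : 'M[algC]_n) i m.
Proof.
rewrite /es /gen mxE /= !addn0 !xpair_eqE /= andbT andbF subr0 //.
Qed.

Lemma AcAc (f g : endo n) : inverse_pair f g -> Ac f *m Ac g = 1%:M.
Proof.
move=> [_ hgf]; apply/matrixP => i m.
have h2 : Mw 1%:M (wapp g (f i)) [:: m] = Mw 1%:M (gen i) [:: m] by rewrite hgf.
rewrite -sigf_Mw ?unitmx1 // /sigf_ (sigma_lin (@phif0 _ 1%:M g)) Mw1_one es_gen in h2.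
rewrite -h2 !mxE; apply: eq_bigr => l _.
rewrite Mw1_one es_Ac /phif sumE (bigD1 l) //= big1 ?addr0.
  by rewrite mul_scl invmx1 [1%:M l l]mxE eqxx mulr1n mul1r subE Mw1_one oneE subr0 es_Ac.
by move=> j /negbTE ne; rewrite mul_scl invmx1 mxE eq_sym ne mul0r.
Qed.



Lemma unip_inv (f g : endo n) k : inverse_pair f g -> (Ac f - 1%:M) ^+ k = 0 ->
  (Ac g - 1%:M) ^+ k = 0.
Proof.
move=> fg hk.
have AB := AcAc fg.
have BA : Ac g *m Ac f = 1%:M by apply: mulmx1C.
have e1 : Ac g - 1%:M = - (Ac g * (Ac f - 1%:M)).
  by rewrite mulrBr mulr1 -mulmxE BA opprB.
have cm : GRing.comm (Ac g) (Ac f - 1%:M).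
  by rewrite /GRing.comm mulrBr mulrBl mulr1 mul1r -!mulmxE AB BA.
by rewrite e1 exprNn exprMn_comm // hk mulr0 mulr0.
Qed.
End Unip.

Section Group.
Variable n : nat.
Implicit Types (f g : endo n) (x y : selt n).

Lemma epow_neg f g s w : epow f g s w = epow g f (- s) w.
Proof.
by case: s => [[|m]|m].
Qed.

Definition negS x : selt n := (x.1, - x.2).

Lemma smul_neg f g x y : smul f g x y = negS (smul g f (negS x) (negS y)).
Proof.
rewrite /smul /negS /= -epow_neg; congr (_, _).
by rewrite opprD !opprK.
Qed.

Lemma iter_neg f g j x :
  iter j (smul f g x) (sone n) = negS (iter j (smul g f (negS x)) (sone n)).
Proof.
elim: j => [|j IH] /=; first by rewrite /negS /sone /= oppr0.
rewrite smul_neg IH; congr (negS (smul _ _ _ _)).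
by rewrite /negS /= opprK; case: (iter _ _ _).
Qed.

Lemma iter_snd f g j x : (iter j (smul f g x) (sone n)).2 = j%:Z * x.2.
Proof.
elim: j => [|j IH] /=; first by rewrite mul0r.
by rewrite IH -addn1 PoszD mulrDl mul1r addrC.
Qed.

Lemma negS_inj : injective negS.
Proof. by move=> [a b] [c d] [-> /eqP]; rewrite eqr_opp => /eqP ->. Qed.

Lemma roots f g : inverse_pair f g -> unipotent_ab f ->
  forall X Y j, svalid X -> svalid Y -> (0 < j)%N ->
  iter j (smul f g X) (sone n) = iter j (smul f g Y) (sone n) -> X = Y.
Proof.
move=> fg /unip_C [k hk] [p s] [q s'] j vX vY j0 e.
have hk' := unip_inv fg hk.
have ss : s = s'.
  have := congr1 snd e; rewrite !iter_snd /=.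
  by apply: mulfI; rewrite eqz_nat -lt0n.
subst s'; congr (_, _).
rewrite /svalid /= in vX vY.
case: s e => r e.
  exact: (pos_case hk vX vY j0 e).
move: e; rewrite (iter_neg f g j (p, Negz r)) (iter_neg f g j (q, Negz r)) => /negS_inj.
have -> : negS (p, Negz r) = (p, Posz r.+1) by rewrite /negS NegzE opprK.
have -> : negS (q, Negz r) = (q, Posz r.+1) by rewrite /negS NegzE opprK.
exact: (pos_case hk' vX vY j0).
Qed.

Lemma sfsg f g : inverse_pair f g -> forall w,
  Mw 1%:M (wapp f (wapp g w)) = Mw 1%:M w.
Proof.
move=> [hfg _] w.
have u1 : (1%:M : 'M[algC]_n) \in unitmx by rewrite unitmx1.
rewrite -!(sigf_Mw u1).
rewrite (@hom_Mw _ 1%:M (fun z : ser n => sigf_ 1%:M f (sigf_ 1%:M g z)) (Mpos 1%:M) (Mneg 1%:M)).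
- by elim: w => [|a w IH] //=; rewrite IH /Mlet; case: a.2.
- by move=> z1 z2; rewrite /sigf_ !(sigmaM (@phif0 _ 1%:M _)).
- by rewrite /sigf_ !(sigma1 (@phif0 _ 1%:M _)).
- move=> i; rewrite (sigf_Mpos u1) (sigf_Mw u1) hfg.
  by rewrite /gen Mw_cons Mw_nilw mulr1.
- by move=> i; apply: MposMneg.
Qed.
End Group.

Section Final.
Variable n : nat.
Implicit Types (f g : endo n) (x y : selt n).

Lemma svalid_iter f g x j : svalid (iter j (smul f g x) (sone n)).
Proof. by case: j => [|j] //=; rewrite /svalid /= /wmul reduce_reduced. Qed.

Lemma sinv_eq f g u : sinv f g (u, Posz 1) = (wapp g (winv u), Negz 0).
Proof. by []. Qed.

Lemma spow_snd f g u m : (spow f g (u, Posz 1) m).2 = m.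
Proof.
case: m => j; first by rewrite /spow iter_snd mulr1.
by rewrite /spow iter_snd sinv_eq /= NegzE mulrN1.
Qed.
End Final.

Lemma main_aux (n : nat) (f g : endo n) :
  inverse_pair f g ->
  admits_UPG_monodromy f g ->
  forall u v : word n, reduced u -> reduced v ->
  (u, Posz 1) <> (v, Posz 1) ->
  ~ common_nontriv_power f g (u, Posz 1) (v, Posz 1).
Proof.
move=> fg [n' [f' [g' [F [fg' [_ unip] [Fv Fhom Finj _]]]]]] u v ru rv neq [m [k [Heq Hne]]].
have u1 : forall N, (1%:M : 'M[algC]_N) \in unitmx by move=> N; rewrite unitmx1.
have Fone : F (sone n) = sone n'.
  have v1 : svalid (sone n) by [].
  have ss : smul f g (sone n) (sone n) = sone n by [].
  have e : F (sone n) = smul f' g' (F (sone n)) (F (sone n)) by rewrite -Fhom // ss.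
  move: (Fv _ v1) e; case: (F (sone n)) => w a vw [hw ha].
  have a0 : a = 0 by apply: (addrI a); rewrite addr0 -ha.
  subst a; rewrite /svalid /= in vw.
  have hM : Mw 1%:M w = Mw 1%:M w * Mw 1%:M w.
    by rewrite {1}hw /wmul Mw_reduce Mw_cat.
  have hM1 : Mw 1%:M w = Mw 1%:M [::].
    by rewrite Mw_nilw -(Mw_winvL 1%:M w) {2}hM mulrA Mw_winvL mul1r.
  by rewrite (MwP_inj (u1 n') vw _ hM1).
have Fiter : forall X j, svalid X ->
    F (iter j (smul f g X) (sone n)) = iter j (smul f' g' (F X)) (sone n').
  move=> X; elim => [|j IH] vX //=; rewrite Fhom ?IH //; exact: svalid_iter.
have key : forall X Y j, svalid X -> svalid Y -> X <> Y -> (0 < j)%N ->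
    iter j (smul f g X) (sone n) = iter j (smul f g Y) (sone n) -> False.
  move=> X Y j vX vY ne j0 e; apply: ne; apply: Finj => //.
  apply: (roots fg' unip (Fv _ vX) (Fv _ vY) j0).
  by rewrite -!Fiter // e.
have mk : m = k by have := congr1 snd Heq; rewrite !spow_snd.
subst k.
case: m Heq Hne => j Heq Hne.
  case: j Heq Hne => [|j] Heq Hne; first by apply: Hne.
  exact: (key (u, Posz 1) (v, Posz 1) j.+1).
apply: (key (sinv f g (u, Posz 1)) (sinv f g (v, Posz 1)) j.+1) => //.
- by rewrite sinv_eq /svalid /= /wapp reduce_reduced.
- by rewrite sinv_eq /svalid /= /wapp reduce_reduced.
move=> h; apply: neq; have := congr1 fst h; rewrite !sinv_eq /= => h1.
have h2 : Mw 1%:M (winv u) = Mw 1%:M (winv v).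
  by rewrite -(sfsg fg (winv u)) h1 sfsg.
have h3 : Mw 1%:M u = Mw 1%:M v.
  by rewrite -[Mw 1%:M u]mulr1 -(Mw_winvL 1%:M v) -h2 mulrA Mw_winvR mul1r.
by rewrite (MwP_inj (u1 n) ru rv h3).
Qed.

Local Close Scope ring_scope.

Theorem lemma2p4 (n : nat) (f g : endo n) :
  inverse_pair f g ->
  admits_UPG_monodromy f g ->
  forall u v : word n, reduced u -> reduced v ->
  (u, Posz 1) <> (v, Posz 1) ->
  ~ common_nontriv_power f g (u, Posz 1) (v, Posz 1).
Proof. exact: main_aux. Qed.
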